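(* Let $G$ be an abelian group and let $\mathrm{pAut}\,G$ be the set of all partial automorphisms $\varphi$ of $G$ such that $G/\mathrm{Dom}\,\varphi$ and $G/\mathrm{Im}\,\varphi$ are $\aleph_1$-free. Then $\mathrm{pAut}\,G$ is a submonoid of the monoid of all partial automorphisms of $G$ (under composition of partial maps), it contains $1=\mathrm{id}_G$ and $-1=-\mathrm{id}_G$, and it is closed under taking weak inverses: if $\varphi\in\mathrm{pAut}\,G$ then $\varphi^{-1}\in\mathrm{pAut}\,G$.
   Context: A partial automorphism of $G$ is a group isomorphism $\varphi:\mathrm{Dom}\,\varphi\to\mathrm{Im}\,\varphi$ between subgroups of $G$; maps act on the right. The composition of partial automorphisms $\varphi,\psi$ is the partial automorphism $\varphi\psi$ with $\mathrm{Dom}(\varphi\psi)=(\mathrm{Im}\,\varphi\cap\mathrm{Dom}\,\psi)\varphi^{-1}$, $x(\varphi\psi)=(x\varphi)\psi$, and $\mathrm{Im}(\varphi\psi)=(\mathrm{Im}\,\varphi\cap\mathrm{Dom}\,\psi)\psi$. The weak inverse $\varphi^{-1}$ is the inverse isomorphism $\mathrm{Im}\,\varphi\to\mathrm{Dom}\,\varphi$. An abelian group is $\aleph_1$-free if every countable subgroup is free. *)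

(* Defs.v *)
From HB Require Import structures.
From mathcomp Require Import all_boot all_order all_algebra.
Set Implicit Arguments. Unset Strict Implicit. Unset Printing Implicit Defensive.
Import GRing.Theory.
Local Open Scope ring_scope.

Section Defs.
Variable G : zmodType.

Definition is_subgroup (S : G -> Prop) : Prop :=
  S 0 /\ (forall x y, S x -> S y -> S (x - y)).

(* ---------- The quotient G/H, elements represented by coset representatives ---------- *)
Definition congr_mod (H : G -> Prop) (x y : G) : Prop := H (x - y).

(* a subset of G/H, given as a union of cosets of H *)
Definition saturated (H S : G -> Prop) : Prop :=
  forall x y, S x -> congr_mod H x y -> S y.

Definition is_subgroup_mod (H S : G -> Prop) : Prop :=
  saturated H S /\ S 0 /\ (forall x y, S x -> S y -> S (x - y)).

(* the subset of G/H represented by S is countable (nonempty case: image of nat) *)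
Definition countable_mod (H S : G -> Prop) : Prop :=
  exists e : nat -> G, forall x, S x <-> exists n, congr_mod H (e n) x.

Definition independent_mod (H B : G -> Prop) : Prop :=
  forall (n : nat) (b : 'I_n -> G) (k : 'I_n -> int),
    (forall i, B (b i)) ->
    (forall i j, i != j -> ~ congr_mod H (b i) (b j)) ->
    H (\sum_(i < n) b i *~ k i) ->
    forall i, k i = 0.

Definition spans_mod (H S B : G -> Prop) : Prop :=
  forall x, S x -> exists (n : nat) (b : 'I_n -> G) (k : 'I_n -> int),
    (forall i, B (b i)) /\ congr_mod H x (\sum_(i < n) b i *~ k i).

Definition free_mod (H S : G -> Prop) : Prop :=
  exists B : G -> Prop, saturated H B /\ (forall b, B b -> S b) /\
    independent_mod H B /\ spans_mod H S B.

Definition quotient_aleph1_free (H : G -> Prop) : Prop :=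
  forall S : G -> Prop, is_subgroup_mod H S -> countable_mod H S -> free_mod H S.

(* ---------- Partial automorphisms, represented by their graphs ---------- *)
Definition pDom (R : G -> G -> Prop) : G -> Prop := fun x => exists y, R x y.
Definition pIm (R : G -> G -> Prop) : G -> Prop := fun y => exists x, R x y.

Definition is_partial_aut (R : G -> G -> Prop) : Prop :=
  [/\ is_subgroup (pDom R), is_subgroup (pIm R),
      (forall x y y', R x y -> R x y' -> y = y'),
      (forall x x' y, R x y -> R x' y -> x = x') &
      (forall x y x' y', R x y -> R x' y' -> R (x + x') (y + y'))].

(* composition (maps act on the right: x(phi psi) = (x phi) psi) *)
Definition pa_comp (R S : G -> G -> Prop) : G -> G -> Prop :=
  fun x z => exists y, R x y /\ S y z.
Definition pa_inv (R : G -> G -> Prop) : G -> G -> Prop := fun x y => R y x.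
Definition pa_id : G -> G -> Prop := fun x y => y = x.
Definition pa_neg : G -> G -> Prop := fun x y => y = - x.

Definition pAutG (R : G -> G -> Prop) : Prop :=
  [/\ is_partial_aut R, quotient_aleph1_free (pDom R) & quotient_aleph1_free (pIm R)].

End Defs.

(* Main.v *)
Require Import Defs.
From mathcomp Require Import all_boot all_order all_algebra.
From Stdlib Require Import ClassicalEpsilon FunctionalExtensionality PropExtensionality Classical.
Set Implicit Arguments. Unset Strict Implicit. Unset Printing Implicit Defensive.
Import GRing.Theory.
Local Open Scope ring_scope.

Section Aux.
Variable G : zmodType.
Implicit Types P H K : G -> Prop.

Lemma sg_add P : is_subgroup P -> forall a b, P a -> P b -> P (a + b).
Proof. move=> [P0 Psub] a b Pa Pb. by rewrite -[b]opprK; apply: (Psub) => //; rewrite -sub0r; apply: (Psub). Qed.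
Lemma sg_opp P : is_subgroup P -> forall a, P a -> P (- a).
Proof. move=> [P0 Psub] a Pa. by rewrite -sub0r; apply: (Psub). Qed.
Lemma sg_sub P : is_subgroup P -> forall a b, P a -> P b -> P (a - b).
Proof. by case. Qed.
Lemma sg0 P : is_subgroup P -> P 0.
Proof. by case. Qed.
Lemma sg_sym P : is_subgroup P -> forall a b, P (a - b) -> P (b - a).
Proof. move=> sP a b h. by rewrite -opprB; apply: sg_opp. Qed.
Lemma sg_trans P : is_subgroup P -> forall a b c, P (a - b) -> P (b - c) -> P (a - c).
Proof. move=> sP a b c h1 h2. have := sg_add sP h1 h2. by rewrite addrA subrK. Qed.
Lemma sg_subsub P : is_subgroup P -> forall a b c d, P (a - b) -> P (c - d) -> P ((a - c) - (b - d)).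
Proof.
move=> sP a b c d h1 h2. have := sg_sub sP h1 h2.
by rewrite !opprB addrACA [in X in _ -> X]addrACA [- c + _]addrC.
Qed.
Lemma sg_mulz P : is_subgroup P -> forall a k, P a -> P (a *~ k).
Proof.
move=> sP a k Pa. have hn : forall m : nat, P (a *+ m).
  elim=> [|m IH]; first by rewrite mulr0n; apply: sg0.
  by rewrite mulrS; apply: sg_add.
case: k => m; first exact: hn.
by rewrite NegzE mulrNz; apply: (sg_opp sP); exact: hn.
Qed.
Lemma sg_sum P : is_subgroup P -> forall n (a : 'I_n -> G) (k : 'I_n -> int),
  (forall i, P (a i)) -> P (\sum_(i < n) a i *~ k i).
Proof.
move=> sP n a k h. apply: (big_ind P); first exact: sg0.
  exact: sg_add. by move=> i _; apply: sg_mulz.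
Qed.
Lemma sg_sumB P : is_subgroup P -> forall n (a b : 'I_n -> G) (k : 'I_n -> int),
  (forall i, P (a i - b i)) -> P (\sum_(i < n) a i *~ k i - \sum_(i < n) b i *~ k i).
Proof.
move=> sP n a b k h. rewrite -sumrB.
under eq_bigr do rewrite -mulrzBl.
exact: sg_sum.
Qed.

Lemma rel_sum (R : G -> G -> Prop) : R 0 0 ->
  (forall x y x' y', R x y -> R x' y' -> R (x - x') (y - y')) ->
  forall n (a b : 'I_n -> G) (k : 'I_n -> int),
  (forall i, R (a i) (b i)) -> R (\sum_(i < n) a i *~ k i) (\sum_(i < n) b i *~ k i).
Proof.
move=> R0 RB.
have RN : forall x y, R x y -> R (- x) (- y).
  by move=> x y h; rewrite -sub0r -(sub0r y); apply: RB.
have RD : forall x y x' y', R x y -> R x' y' -> R (x + x') (y + y').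
  by move=> x y x' y' h h'; rewrite -(opprK x') -(opprK y'); apply: RB => //; apply: RN.
move=> n a b k h. apply: (big_ind2 R) => // i _.
have hn : forall m : nat, R (a i *+ m) (b i *+ m).
  elim=> [|m IH]; first by rewrite !mulr0n.
  by rewrite !mulrS; apply: RD.
case: (k i) => m; first exact: hn.
by rewrite NegzE !mulrNz; apply: RN; exact: hn.
Qed.
End Aux.

Section Aux2.
Variable G : zmodType.
Implicit Types H K B : G -> Prop.

Lemma indep_weak H B : independent_mod H B -> forall n (b : 'I_n -> G) (k : 'I_n -> int),
  (forall i, k i = 0 \/ B (b i)) ->
  (forall i j, i != j -> k i != 0 -> k j != 0 -> ~ congr_mod H (b i) (b j)) ->
  H (\sum_(i < n) b i *~ k i) -> forall i, k i = 0.
Proof.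
move=> hB; elim=> [|n IH] b k hk hnc hs; first by case.
case: (pickP (fun i => k i == 0)) => [i /eqP ki0 | hall].
  have e : \sum_(j < n.+1) b j *~ k j = \sum_(j < n) b (lift i j) *~ k (lift i j).
    by rewrite (bigD1_ord i) //= ki0 mulr0z add0r.
  rewrite e in hs.
  have IH' := IH (fun j => b (lift i j)) (fun j => k (lift i j)) (fun j => hk _) _ hs.
  move=> i0; case: (unliftP i i0) => [j -> | ->] //; apply: IH'.
  by move=> j1 j2 ne; apply: hnc; rewrite (inj_eq (@lift_inj _ i)).
move=> i. apply: (hB _ b k) => //.
- move=> j; case: (hk j) => // kj0; move: (hall j); by rewrite kj0.
- move=> i1 j1 ne; apply: hnc => //; by rewrite hall.
Qed.
End Aux2.

Section Transfer.
Variable G : zmodType.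
Implicit Types H K B S : G -> Prop.

Lemma transfer H H' (R : G -> G -> Prop) S :
  is_subgroup H -> is_subgroup H' -> R 0 0 ->
  (forall x y x' y', R x y -> R x' y' -> R (x - x') (y - y')) ->
  (forall x y, R x y -> (H x <-> H' y)) ->
  is_subgroup_mod H S -> countable_mod H S -> (forall x, S x -> exists y, R x y) ->
  quotient_aleph1_free H' -> free_mod H S.
Proof.
move=> sH sH' R0 RB RH [satS [S0 SB]] [e he] SR qH'.
have sS : is_subgroup S by [].
have Se : forall n, S (e n) by move=> n; apply/he; exists n; rewrite /congr_mod subrr; apply: sg0.
pose e' n := epsilon (inhabits (0 : G)) (fun y => R (e n) y).
have Re' : forall n, R (e n) (e' n) by move=> n; apply: epsilon_spec; apply: SR.
pose S' := fun y => exists x y0, [/\ S x, R x y0 & H' (y - y0)].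
have sS' : is_subgroup_mod H' S'.
  split; [|split].
  - move=> y y2 [x [y0 [Sx Rx h]]] h2; exists x, y0; split => //.
    apply: (sg_trans sH') h; exact: sg_sym.
  - by exists 0, 0; split => //; rewrite subrr; apply: sg0.
  - move=> y y2 [x [y0 [Sx Rx h]]] [x2 [y02 [Sx2 Rx2 h2]]].
    exists (x - x2), (y0 - y02); split; [exact: SB | exact: RB | exact: sg_subsub].
have cS' : countable_mod H' S'.
  exists e' => y; split.
  - move=> [x [y0 [Sx Rx h]]]. have [n hn] := (proj1 (he x)) Sx.
    exists n. have := RB _ _ _ _ (Re' n) Rx. move/RH => [/(_ hn) h1 _].
    rewrite /congr_mod; apply: (sg_trans sH') h1 _; exact: (sg_sym sH' h).
  - move=> [n hn]; exists (e n), (e' n); split => //; apply: sg_sym => //.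
have [B' [satB' [B'S' [indB' spB']]]] := qH' _ sS' cS'.
exists (fun x => S x /\ exists y, R x y /\ B' y); split; [|split; [|split]].
- move=> x x2 [Sx [y [Rxy B'y]]] hx; split; first exact: satS hx.
  have [y2 Rx2] := SR _ (satS _ _ Sx hx).
  exists y2; split => //; apply: satB' B'y _.
  by apply/(RH _ _ (RB _ _ _ _ Rxy Rx2)).
- by move=> x [].
- move=> n b k hb hnc hs.
  have [ys hys] := fin_all_exists (fun i => proj2 (hb i)).
  have Rs := rel_sum R0 RB k (fun i => proj1 (hys i)).
  apply: (indB' n ys k) => [i|i j ne hc|]; first exact: (proj2 (hys i)).
    apply: (hnc i j ne); apply/(RH _ _ (RB _ _ _ _ (proj1 (hys i)) (proj1 (hys j)))).
    exact: hc.
  by apply/(RH _ _ Rs).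
- move=> x Sx. have [y Rxy] := SR _ Sx.
  have S'y : S' y by exists x, y; split => //; rewrite subrr; apply: sg0.
  have [n [b' [k [hb' hy]]]] := spB' y S'y.
  have [f hf] := fin_all_exists (fun i => B'S' _ (hb' i)).
  have [g hg] := fin_all_exists (fun i => hf i).
  exists n, f, k; split.
    move=> i; have [Sfi Rfi hfi] := hg i; split => //; exists (g i); split => //.
    by apply: satB' (hb' i) hfi.
  have Rs := rel_sum R0 RB k (fun i => let: And3 _ r _ := hg i in r).
  apply/(RH _ _ (RB _ _ _ _ Rxy Rs)).
  apply: (sg_trans sH' hy). apply: sg_sumB => // i. by case: (hg i).
Qed.
End Transfer.

Section Ext.
Variable G : zmodType.
Implicit Types H K B S : G -> Prop.

Lemma sg_bigsum P : is_subgroup P -> forall n (t : 'I_n -> G),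
  (forall i, P (t i)) -> P (\sum_(i < n) t i).
Proof.
move=> sP n t h; apply: (big_ind P) => //; [exact: sg0 | exact: sg_add].
Qed.

Lemma ext_lemma H K : is_subgroup H -> is_subgroup K -> (forall x, H x -> K x) ->
  quotient_aleph1_free K ->
  (forall S, (forall x, S x -> K x) -> is_subgroup_mod H S -> countable_mod H S -> free_mod H S) ->
  quotient_aleph1_free H.
Proof.
move=> sH sK HK qK hK S [satS [S0 SB]] [e he].
have sS : is_subgroup S by [].
have Se : forall n, S (e n) by move=> n; apply/he; exists n; rewrite /congr_mod subrr; apply: sg0.
pose S1 := fun x => exists c, S c /\ K (x - c).
have sS1 : is_subgroup_mod K S1.
  split; [|split].
  - move=> x y [c [Sc hc]] hxy; exists c; split => //.
    apply: (sg_trans sK) hc; exact: (sg_sym sK hxy).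
  - by exists 0; split => //; rewrite subrr; apply: sg0.
  - move=> x y [c [Sc hc]] [d [Sd hd]]; exists (c - d); split; [exact: SB | exact: sg_subsub].
have cS1 : countable_mod K S1.
  exists e => x; split.
  - move=> [c [Sc hc]]; have [n hn] := proj1 (he c) Sc; exists n.
    rewrite /congr_mod; apply: (sg_trans sK (HK _ hn)); exact: (sg_sym sK hc).
  - move=> [n hn]; exists (e n); split => //; exact: (sg_sym sK hn).
have [B1 [satB1 [B1S1 [indB1 spB1]]]] := qK _ sS1 cS1.
pose S2 := fun x => S x /\ K x.
have sS2 : is_subgroup_mod H S2.
  split; [|split].
  - move=> x y [Sx Kx] hxy; split; first exact: satS Sx hxy.
    have := sg_sub sK Kx (HK _ hxy); by rewrite subKr.
  - by split => //; apply: sg0.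
  - move=> x y [Sx Kx] [Sy Ky]; split; [exact: SB | exact: sg_sub].
pose e2 n := epsilon (inhabits (0 : G)) (fun y => (K (e n) /\ y = e n) \/ (~ K (e n) /\ y = 0)).
have he2 : forall n, (K (e n) /\ e2 n = e n) \/ (~ K (e n) /\ e2 n = 0).
  move=> n; apply: (epsilon_spec (inhabits (0 : G)) (fun y => (K (e n) /\ y = e n) \/ (~ K (e n) /\ y = 0))).
  case: (classic (K (e n))) => h.
  - by exists (e n); left.
  - by exists 0; right.
have cS2 : countable_mod H S2.
  exists e2 => x; split.
  - move=> [Sx Kx]; have [n hn] := proj1 (he x) Sx; exists n.
    have Ken : K (e n) by have := sg_add sK (HK _ hn) Kx; rewrite subrK.
    by case: (he2 n) => [[_ ->] | [nK _]].
  - move=> [n hn]; case: (he2 n) => [[Ken e2n] | [_ e2n]]; rewrite e2n in hn.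
    + split; first by apply: satS hn.
      have := sg_sub sK Ken (HK _ hn); by rewrite subKr.
    + split; first by apply: satS hn.
      have := sg_opp sK (HK _ hn); by rewrite sub0r opprK.
have [B2 [satB2 [B2S2 [indB2 spB2]]]] := hK S2 (fun x (h : S2 x) => proj2 h) sS2 cS2.
pose r b := epsilon (inhabits (0 : G)) (fun c => S c /\ K (c - b)).
have r_spec : forall b, S1 b -> S (r b) /\ K (r b - b).
  move=> b hb; apply: (epsilon_spec (inhabits (0 : G)) (fun c => S c /\ K (c - b))).
  by case: hb => c [Sc hc]; exists c; split => //; exact: (sg_sym sK hc).
have r_congr : forall b b', K (b - b') -> r b = r b'.
  move=> b b' hbb; rewrite /r; congr (epsilon _ _).
  apply: functional_extensionality => c; apply: propositional_extensionality.
  split=> -[Sc hc]; split => //.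
  - exact: (sg_trans sK hc hbb).
  - exact: (sg_trans sK hc (sg_sym sK hbb)).
exists (fun x => (exists b, B1 b /\ H (x - r b)) \/ B2 x); split; [|split; [|split]].
- move=> x y [[b [B1b hb]] | B2x] hxy; last by right; apply: satB2 B2x hxy.
  left; exists b; split => //; apply: (sg_trans sH) hb; exact: (sg_sym sH hxy).
- move=> x [[b [B1b hb]] | B2x]; last by case: (B2S2 _ B2x).
  have [Srb _] := r_spec _ (B1S1 _ B1b).
  by apply: satS Srb _; apply: (sg_sym sH).
- move=> n b k hb hnc hs.
  have hex : forall i, exists p : G * int,
      (B1 p.1 /\ K (b i - p.1) /\ H (b i - r p.1) /\ p.2 = k i) \/ (B2 (b i) /\ p.2 = 0).
    move=> i; case: (hb i) => [[b0 [B1b0 hb0]] | B2bi]; last by exists (0, 0); right.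
    exists (b0, k i); left; split => //; split => //=.
    have [_ Kr] := r_spec _ (B1S1 _ B1b0).
    exact: (sg_trans sK (HK _ hb0) Kr).
  have [f hf] := fin_all_exists hex.
  have k1z : forall i, (f i).2 = 0.
    move=> i0; apply: (@indep_weak _ K B1 indB1 n (fun i => (f i).1) (fun i => (f i).2)).
    + by move=> i; case: (hf i) => [[? _] | [_ ->]]; [right | left].
    + move=> i j ne; case: (hf i) => [[B1i [Ki [Hi ki]]] | [_ ->]]; last by rewrite eqxx.
      case: (hf j) => [[B1j [Kj [Hj kj]]] | [_ ->]]; last by rewrite eqxx.
      move=> _ _ hc; apply: (hnc i j ne).
      rewrite /congr_mod (r_congr _ _ hc) in Hi.
      exact: (sg_trans sH Hi (sg_sym sH Hj)).
    + have hK1 : K (\sum_(i < n) b i *~ k i - \sum_(i < n) (f i).1 *~ (f i).2).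
        rewrite -sumrB; apply: sg_bigsum => // i.
        case: (hf i) => [[_ [Ki [_ ->]]] | [B2i ->]].
        * rewrite -mulrzBl; exact: sg_mulz.
        * rewrite mulr0z subr0; apply: sg_mulz => //; by case: (B2S2 _ B2i).
      have := sg_sub sK (HK _ hs) hK1; by rewrite subKr.
  apply: (@indep_weak _ H B2 indB2 n b k) => //.
  + by move=> i; case: (hf i) => [[_ [_ [_ <-]]] | [? _]]; [left; apply: k1z | right].
  + by move=> i j ne _ _; apply: hnc.
- move=> x Sx.
  have S1x : S1 x by exists x; split => //; rewrite subrr; apply: sg0.
  have [n1 [b1 [k1 [hb1 hx1]]]] := spB1 x S1x.
  pose xs j := r (b1 j).
  have hxs : forall j, S (xs j) /\ K (xs j - b1 j) := fun j => r_spec _ (B1S1 _ (hb1 j)).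
  pose y := x - \sum_(j < n1) xs j *~ k1 j.
  have S2y : S2 y.
    split; first by apply: SB => //; apply: sg_sum => // j; case: (hxs j).
    apply: (sg_trans sK hx1); apply: sg_sumB => // j.
    apply: (sg_sym sK); by case: (hxs j).
  have [n2 [b2 [k2 [hb2 hy2]]]] := spB2 y S2y.
  pose bb (i : 'I_(n1 + n2)) := match split i with inl j => xs j | inr l => b2 l end.
  pose kk (i : 'I_(n1 + n2)) := match split i with inl j => k1 j | inr l => k2 l end.
  exists (n1 + n2)%N, bb, kk; split.
    move=> i; rewrite /bb; case: (split i) => [j | l]; last by right.
    left; exists (b1 j); split => //; rewrite subrr; exact: sg0.
  have -> : \sum_(i < n1 + n2) bb i *~ kk i =
            \sum_(j < n1) xs j *~ k1 j + \sum_(l < n2) b2 l *~ k2 l.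
    rewrite big_split_ord /=; congr (_ + _); apply: eq_bigr => j _.
    - by rewrite /bb /kk (unsplitK (inl j : 'I_n1 + 'I_n2)).
    - by rewrite /bb /kk (unsplitK (inr j : 'I_n1 + 'I_n2)).
  by rewrite /congr_mod opprD addrA.
Qed.
End Ext.

Section Main.
Variable G : zmodType.
Implicit Types H K B S : G -> Prop.

Lemma pa_R00 (R : G -> G -> Prop) : is_partial_aut R -> R 0 0.
Proof.
case=> sD _ fR _ aR. have [y Ry] := sg0 sD.
have := aR _ _ _ _ Ry Ry; rewrite addr0 => Ryy.
have e := fR _ _ _ Ryy Ry.
have y0 : y = 0 by rewrite -[y](addrK y) e subrr.
by rewrite y0 in Ry.
Qed.

Lemma pa_Rsub (R : G -> G -> Prop) : is_partial_aut R ->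
  forall x y x' y', R x y -> R x' y' -> R (x - x') (y - y').
Proof.
move=> pR; have R0 := pa_R00 pR; case: pR => sD _ fR _ aR x y x' y' Rxy Rxy'.
have [w Rw] := sg_opp sD (ex_intro _ y' Rxy').
have := aR _ _ _ _ Rxy' Rw; rewrite subrr => R0w.
have e := fR _ _ _ R0w R0.
have -> : - y' = w by rewrite -(addKr y' w) e addr0.
exact: aR.
Qed.

Lemma qaf_full H : (forall x, H x) -> quotient_aleph1_free H.
Proof.
move=> hH S _ _; exists (fun _ => False); split; [|split; [|split]].
- by [].
- by [].
- by move=> n b k hb _ _ i; case: (hb i).
- move=> x _; exists 0%N, (fun _ => 0), (fun _ => 0); split; first by case.
  exact: hH.
Qed.

Lemma sg_full : is_subgroup (fun _ : G => True).
Proof. by []. Qed.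

Lemma pAut_id : pAutG (@pa_id G).
Proof.
have hD : forall x, pDom (@pa_id G) x by move=> x; exists x.
have hI : forall x, pIm (@pa_id G) x by move=> x; exists x.
split; [split | exact: qaf_full | exact: qaf_full].
- by split => *; apply: hD.
- by split => *; apply: hI.
- by move=> x y y' -> ->.
- by move=> x x' y -> ->.
- by move=> x y x' y' -> ->.
Qed.

Lemma pAut_neg : pAutG (@pa_neg G).
Proof.
have hD : forall x, pDom (@pa_neg G) x by move=> x; exists (- x).
have hI : forall x, pIm (@pa_neg G) x by move=> x; exists (- x); rewrite /pa_neg opprK.
split; [split | exact: qaf_full | exact: qaf_full].
- by split => *; apply: hD.
- by split => *; apply: hI.
- by move=> x y y' -> ->.
- by move=> x x' y -> /eqP; rewrite eqr_opp => /eqP.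
- by move=> x y x' y' -> ->; rewrite /pa_neg opprD.
Qed.

Lemma pAut_inv (R : G -> G -> Prop) : pAutG R -> pAutG (pa_inv R).
Proof.
case=> [[sD sI fR iR aR] qD qI]; split => //; split => //.
- by move=> x y y'; apply: iR.
- by move=> x x' y; apply: fR.
- by move=> x y x' y'; apply: aR.
Qed.

Lemma qaf_inter A B : is_subgroup A -> is_subgroup B ->
  quotient_aleph1_free A -> quotient_aleph1_free B ->
  quotient_aleph1_free (fun x => A x /\ B x).
Proof.
move=> sA sB qA qB.
have sAB : is_subgroup (fun x => A x /\ B x).
  split; first by split; apply: sg0.
  by move=> x y [? ?] [? ?]; split; apply: sg_sub.
apply: (ext_lemma sAB sA) => //; first by move=> x [].
move=> S SA sS cS.
apply: (@transfer _ _ B (fun x y => A x /\ y = x)) => //.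
- by split => //; apply: sg0.
- by move=> x y x' y' [Ax ->] [Ax' ->]; split => //; apply: sg_sub.
- by move=> x y [Ax ->]; split => [[]|].
- by move=> x Sx; exists x; split => //; apply: SA.
Qed.

Lemma pa_comp_pa (R S : G -> G -> Prop) : is_partial_aut R -> is_partial_aut S ->
  is_partial_aut (pa_comp R S).
Proof.
move=> pR pS; have R0 := pa_R00 pR; have S0 := pa_R00 pS.
have RB := pa_Rsub pR; have SB := pa_Rsub pS.
case: pR => _ _ fR iR aR; case: pS => _ _ fS iS aS.
split.
- split; first by exists 0, 0.
  move=> x x' [z [y [Rxy Syz]]] [z' [y' [Rxy' Syz']]].
  by exists (z - z'), (y - y'); split; [apply: RB | apply: SB].
- split; first by exists 0, 0.
  move=> x x' [z [y [Rxy Syz]]] [z' [y' [Rxy' Syz']]].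
  by exists (z - z'), (y - y'); split; [apply: RB | apply: SB].
- move=> x z z' [y [Rxy Syz]] [y' [Rxy' Syz']].
  rewrite (fR _ _ _ Rxy Rxy') in Syz; exact: fS Syz Syz'.
- move=> x x' z [y [Rxy Syz]] [y' [Rxy' Syz']].
  rewrite -(iS _ _ _ Syz Syz') in Rxy'; exact: iR Rxy Rxy'.
- move=> x z x' z' [y [Rxy Syz]] [y' [Rxy' Syz']].
  by exists (y + y'); split; [apply: aR | apply: aS].
Qed.

Lemma qaf_comp_dom (R S : G -> G -> Prop) : pAutG R -> pAutG S ->
  quotient_aleph1_free (pDom (pa_comp R S)).
Proof.
move=> [pR qDR qIR] [pS qDS qIS].
have pC := pa_comp_pa pR pS.
have R0 := pa_R00 pR; have RB := pa_Rsub pR.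
have [sDC _ _ _ _] := pC.
have [sDR sIR fR _ _] := pR; have [sDS _ _ _ _] := pS.
apply: (ext_lemma sDC sDR) => //.
  by move=> x [z [y [Rxy _]]]; exists y.
move=> S0 S0D sS0 cS0.
apply: (@transfer _ _ (fun y => pIm R y /\ pDom S y) R) => //.
- split; first by split; apply: sg0.
  by move=> x y [? ?] [? ?]; split; apply: sg_sub.
- move=> x y Rxy; split.
  + move=> [z [y' [Rxy' Sy'z]]]; rewrite (fR _ _ _ Rxy Rxy') .
    by split; [exists x | exists z].
  + by move=> [_ [z Syz]]; exists z, y.
- exact: qaf_inter.
Qed.

Lemma pAut_comp (R S : G -> G -> Prop) : pAutG R -> pAutG S -> pAutG (pa_comp R S).
Proof.
move=> hR hS; split.
- exact: pa_comp_pa (let: And3 p _ _ := hR in p) (let: And3 p _ _ := hS in p).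
- exact: qaf_comp_dom.
- have -> : pIm (pa_comp R S) = pDom (pa_comp (pa_inv S) (pa_inv R)).
    apply: functional_extensionality => z; apply: propositional_extensionality.
    split=> -[x [y [h1 h2]]]; by exists x, y.
  by apply: qaf_comp_dom; apply: pAut_inv.
Qed.
End Main.

Theorem lemma3p1 (G : zmodType) :
  [/\ pAutG (@pa_id G),
      pAutG (@pa_neg G),
      (forall R S : G -> G -> Prop, pAutG R -> pAutG S -> pAutG (pa_comp R S)) &
      (forall R : G -> G -> Prop, pAutG R -> pAutG (pa_inv R))].
Proof.
split; [exact: pAut_id | exact: pAut_neg | exact: pAut_comp | exact: pAut_inv].
Qed.
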